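(* Let $X$ be a finite set, $\mathbb{F}$ a field, $n\ge 2$, and let $F:X^n\to\mathbb{F}$ be a diagonal tensor, i.e. \[ F(x_1,\dots,x_n)=\sum_{a\in A}c_a\,\delta_a(x_1)\cdots\delta_a(x_n) \] for some $A\subset X$ and constants $c_a\ne 0$ for all $a\in A$, where $\delta_a(x)=1$ if $x=a$ and $0$ otherwise. Then the partition rank of $F$ equals $|A|$.
   Context: Let $X_1,\dots,X_n$ be finite sets and $\mathbb{F}$ a field. For $S=\{s_1<\dots<s_m\}\subset\{1,\dots,n\}$ write $\vec x_S=(x_{s_1},\dots,x_{s_m})$. A partition of $\{1,\dots,n\}$ is a collection of nonempty pairwise disjoint subsets whose union is $\{1,\dots,n\}$; it is trivial if it consists of the single set $\{1,\dots,n\}$. A function $h:X_1\times\cdots\times X_n\to\mathbb{F}$ has partition rank $1$ if there is a non-trivial partition $P$ of $\{1,\dots,n\}$ and functions $f_B$ ($B\in P$) with $h(x_1,\dots,x_n)=\prod_{B\in P}f_B(\vec x_B)$. The partition rank of $F:X_1\times\cdots\times X_n\to\mathbb{F}$ is the minimal $r$ such that $F$ is a sum of $r$ functions of partition rank $1$ (the zero function has partition rank $0$). *)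

(* Defs.v *)
From HB Require Import structures.
From mathcomp Require Import all_boot all_order all_algebra.
Set Implicit Arguments. Unset Strict Implicit. Unset Printing Implicit Defensive.
Import GRing.Theory.
Local Open Scope ring_scope.

(* Points of X_1 x ... x X_n are modelled as functions x : 'I_n -> X
   (here all X_i equal a single finite type X, as in the theorem). *)

Definition depends_only_on (X : Type) (K : Type) (n : nat)
  (B : {set 'I_n}) (f : ('I_n -> X) -> K) : Prop :=
  forall x y : 'I_n -> X, (forall i, i \in B -> x i = y i) -> f x = f y.

Definition prank1 (X : Type) (K : fieldType) (n : nat)
  (h : ('I_n -> X) -> K) : Prop :=
  exists (P : {set {set 'I_n}}) (f : {set 'I_n} -> ('I_n -> X) -> K),
    [/\ partition P [set: 'I_n],
        P != [set [set: 'I_n]],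
        (forall B, B \in P -> depends_only_on B (f B)) &
        forall x, h x = \prod_(B in P) f B x].

Definition prank_le (X : Type) (K : fieldType) (n : nat)
  (F : ('I_n -> X) -> K) (r : nat) : Prop :=
  exists h : 'I_r -> ('I_n -> X) -> K,
    (forall i, prank1 (h i)) /\ forall x, F x = \sum_(i < r) h i x.

Definition partition_rank (X : Type) (K : fieldType) (n : nat)
  (F : ('I_n -> X) -> K) (r : nat) : Prop :=
  prank_le F r /\ forall r', prank_le F r' -> (r <= r')%N.

(* Main.v *)
Require Import Defs.
From HB Require Import structures.
From mathcomp Require Import all_boot all_order all_algebra.
From mathcomp Require Import ring.
Set Implicit Arguments. Unset Strict Implicit. Unset Printing Implicit Defensive.
Import GRing.Theory.
Local Open Scope ring_scope.

Fixpoint all_prop (T : Type) (P : T -> Prop) (s : seq T) : Prop :=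
  if s is x :: s' then P x /\ all_prop P s' else True.

Definition pair (X : finType) (K : fieldType) (u l : X -> K) := \sum_t u t * l t.

Lemma pair_upd (X : finType) (K : fieldType) (u l : X -> K) i0 tau :
  pair (fun t => u t + (if t == i0 then tau else 0)) l = pair u l + tau * l i0.
Proof.
have E : \sum_t (if t == i0 then tau else 0) * l t = tau * l i0.
  rewrite (bigD1 i0) //= eqxx big1 ?addr0 // => t /negbTE ->; exact: mul0r.
rewrite /pair -E -big_split /=; apply: eq_bigr => t _; exact: mulrDl.
Qed.

Lemma pairB (X : finType) (K : fieldType) (u l p : X -> K) k :
  pair u (fun t => l t - k * p t) = pair u l - k * pair u p.
Proof.
rewrite /pair mulr_sumr -sumrB; apply: eq_bigr => t _; ring.
Qed.

Lemma support (X : finType) (K : fieldType) (n : nat) : forall (s : seq (X -> K)) (P : {set X}), size s = n ->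
  exists u : X -> K, (forall t, t \notin P -> u t = 0 :> K) /\
    all_prop (fun l => pair u l = 0 :> K) s /\
    (#|P| <= #|[set t | u t != 0%R]| + size s)%N.
Proof.
elim: n => [|n IH] [|psi s] P //= Hs; last move: Hs => [[Hs]].
  exists (fun t => if t \in P then 1 else 0); split; first by move=> t /negbTE ->.
  split=> //; rewrite addn0; apply: subset_leq_card; apply/subsetP => t tP.
  by rewrite inE tP oner_neq0.
case: (pickP [pred i | (i \in P) && (psi i != 0)]) => [i0 /andP [i0P psi0] | H].
  have [u' [u'0 [u'l u'c]]] := IH [seq (fun t => l t - l i0 / psi i0 * psi t) | l <- s] (P :\ i0) (etrans (size_map _ _) Hs).
  set tau := - pair u' psi / psi i0.
  exists (fun t => u' t + (if t == i0 then tau else 0)).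
  split.
    move=> t tP; have ti0 : t != i0 by apply: contraNneq tP => ->.
    by rewrite (negbTE ti0) addr0 u'0 // !inE (negbTE tP) andbF.
  have Hpsi : pair (fun t => u' t + (if t == i0 then tau else 0)) psi = 0.
    by rewrite pair_upd /tau; field.
  split.
    split => //; move: u'l; clear -Hpsi psi0; elim: s => //= l s IHs [Hl Hs]; split; last exact: IHs.
    rewrite pair_upd; move: Hl; rewrite pairB => /eqP; rewrite subr_eq0 => /eqP ->.
    by rewrite /tau; field.
  rewrite (cardsD1 i0) i0P /= addnS ltnS; apply: leq_trans u'c _; rewrite size_map Hs.
  rewrite leq_add2r; apply: subset_leq_card; apply/subsetP => t; rewrite !inE => ut.
  have ti0 : t != i0.
    apply: contraNneq ut => ->; by rewrite u'0 // !inE eqxx.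
  by rewrite (negbTE ti0) addr0.
have [u [u0 [ul uc]]] := IH s P Hs.
exists u; split => //; split; last by rewrite /= addnS; apply: leqW.
split => //; rewrite /pair big1 // => t _.
case tP: (t \in P); last by rewrite u0 ?tP // mul0r.
by move: (H t); rewrite /= tP /= => /negbFE /eqP ->; rewrite mulr0.
Qed.

Lemma all_prop_map_filter (T U : Type) (P : U -> Prop) (f : T -> U) (q : pred T) s :
  all_prop P (map f (filter q s)) -> all_prop (fun x => q x -> P (f x)) s.
Proof.
elim: s => //= x s IHs; case: (boolP (q x)) => qx /=.
  by move=> [Px Hs]; split; [move=> _ | apply: IHs].
by move=> Hs; split => //; apply: IHs.
Qed.

Section Main.
Variables (X : finType) (K : fieldType) (n : nat).

Definition upd (x : 'I_n -> X) (j : 'I_n) (t : X) : 'I_n -> X :=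
  fun i => if i == j then t else x i.

Record dat := Dat { dS : {set 'I_n}; dT : {set 'I_n};
  df : ('I_n -> X) -> K; dg : ('I_n -> X) -> K }.

Record good (J : {set 'I_n}) (d : dat) : Prop := Good {
  gS0 : dS d != set0; gT0 : dT d != set0; gST : dS d :&: dT d = set0;
  gSJ : dS d \subset J; gTJ : dT d \subset J;
  gf : depends_only_on (dS d) (df d); gg : depends_only_on (dT d) (dg d) }.

Definition ev (d : dat) x := df d x * dg d x.

Lemma dep_upd (B : {set 'I_n}) (f : ('I_n -> X) -> K) j x t :
  depends_only_on B f -> j \notin B -> f (upd x j t) = f x.
Proof.
move=> H jB; apply: H => i iB; rewrite /upd.
by have -> : (i == j) = false by apply: contraNF jB => /eqP <-.
Qed.

Lemma dep_upd1 (f : ('I_n -> X) -> K) j x t :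
  depends_only_on [set j] f -> f (upd x j t) = f (fun _ => t).
Proof. by move=> H; apply: H => i; rewrite inE /upd => ->. Qed.

Lemma dep_contract (B : {set 'I_n}) (f : ('I_n -> X) -> K) j (v : X -> K) :
  depends_only_on B f ->
  depends_only_on (B :\ j) (fun x => \sum_t v t * f (upd x j t)).
Proof.
move=> H x y Hxy; apply: eq_bigr => t _; congr (_ * _); apply: H => i iB.
rewrite /upd; case: ifP => // /negbT ij; apply: Hxy; by rewrite in_setD1 ij iB.
Qed.

Lemma setD1_neq0 (T : {set 'I_n}) j : T != set0 -> T != [set j] -> T :\ j != set0.
Proof.
move=> T0 Tj; apply/negP => /eqP E.
have : T \subset [set j] by rewrite -setD_eq0 E.
by rewrite subset1 (negbTE T0) (negbTE Tj).
Qed.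

Lemma sub1_mem (S : {set 'I_n}) j : S \subset [set j] -> S != set0 -> j \in S.
Proof. by rewrite subset1 => /orP [/eqP -> _|->//]; rewrite set11. Qed.

Lemma diag_const (A : {set X}) (c : X -> K) (J : {set 'I_n}) a j :
  a \in A -> j \in J ->
  \sum_(b in A) c b * \prod_(i in J) (((fun _ => a) : 'I_n -> X) i == b)%:R = c a.
Proof.
move=> aA jJ; rewrite (bigD1 a) //=.
rewrite [X in _ + X]big1; last first.
  move=> b /andP [_ ba]; rewrite (bigD1 j) //= eq_sym (negbTE ba).
  by rewrite mul0r mulr0.
by rewrite addr0 big1 ?mulr1 // => i _; rewrite eqxx.
Qed.


Lemma main m : forall (J : {set 'I_n}) (A : {set X}) (c : X -> K) (ds : seq dat),
  #|J| = m.+1 -> (forall a, a \in A -> c a != 0) -> all_prop (good J) ds ->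
  (forall x, \sum_(a in A) c a * \prod_(i in J) (x i == a)%:R = \sum_(d <- ds) ev d x) ->
  (#|A| <= size ds)%N.
Proof.
elim: m => [|m IH] J A c ds HJ hc hg hF.
  have [j Jj] : exists j, J = [set j] by apply/cards1P; rewrite HJ.
  have jJ : j \in J by rewrite Jj set11.
  case: ds hg hF => [_ hF|d ds [[S0 T0 ST SJ TJ _ _] _] _]; last first.
    rewrite Jj in SJ TJ; have jS := sub1_mem SJ S0; have jT := sub1_mem TJ T0.
    by have := in_set0 j; rewrite -ST inE jS jT.
  rewrite leqn0 cards_eq0; apply/eqP/setP => a; rewrite inE; apply/negP => aA.
  have := hF (fun _ => a); rewrite big_nil (diag_const c aA jJ) => E.
  by move: (hc a aA); rewrite E eqxx.
have [j jJ] : exists j, j \in J by apply/set0Pn; rewrite -card_gt0 HJ.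
set J' := J :\ j.
have HJ' : #|J'| = m.+1 by move: HJ; rewrite (cardsD1 j) jJ => -[].
pose single (d : dat) := (dS d == [set j]) || (dT d == [set j]).
pose phi (d : dat) : X -> K :=
  fun t => if dS d == [set j] then df d (fun _ => t) else dg d (fun _ => t).
have [v [v0 [vphi vc]]] := @support X K _ (map phi (filter single ds)) A (erefl _).
pose contract (d : dat) := if j \in dT d then
    Dat (dS d) (dT d :\ j) (df d) (fun x => \sum_t v t * dg d (upd x j t))
  else Dat (dS d :\ j) (dT d) (fun x => \sum_t v t * df d (upd x j t)) (dg d).
pose ds' := map contract (filter (predC single) ds).
have Hg : forall ds0, all_prop (good J) ds0 ->
    all_prop (good J') (map contract (filter (predC single) ds0)).
  elim => // d ds0 IHd [gd gds] /=.
  case: (boolP (single d)) => sd /=; first exact: IHd.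
  split; last exact: IHd.
  case: gd => S0 T0 ST SJ TJ gf gg.
  move: sd; rewrite /single negb_or => /andP [Sj Tj].
  rewrite /contract; case: ifP => jT; constructor => /=.
  - exact: S0.
  - exact: setD1_neq0.
  - by rewrite setIDA ST set0D.
  - rewrite subsetD1 SJ /=; apply/negP => jS.
    by have := in_set0 j; rewrite -ST inE jS jT.
  - exact: setSD.
  - exact: gf.
  - exact: dep_contract.
  - exact: setD1_neq0.
  - exact: T0.
  - by rewrite setIDAC ST set0D.
  - exact: setSD.
  - by rewrite subsetD1 TJ jT.
  - exact: dep_contract.
  - exact: gg.
have Hev : forall d, good J d -> (single d -> pair v (phi d) = 0) -> forall x,
    \sum_t v t * ev d (upd x j t) = if single d then 0 else ev (contract d) x.
  move=> d [S0 T0 ST SJ TJ gf gg] hp x.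
  case: (boolP (single d)) => sd.
    have {}hp := hp sd.
    case: (boolP (dS d == [set j])) => [/eqP Sj | Sj].
      have jT : j \notin dT d.
        by apply/negP => jT; have := in_set0 j; rewrite -ST inE Sj set11 jT.
      rewrite Sj in gf.
      transitivity (pair v (phi d) * dg d x); last by rewrite hp mul0r.
      rewrite /pair mulr_suml; apply: eq_bigr => t _.
      by rewrite /ev /phi Sj eqxx (dep_upd1 _ _ gf) (dep_upd _ _ gg jT) mulrA.
    have /eqP Tj : dT d == [set j] by move: sd; rewrite /single (negbTE Sj).
    have jS : j \notin dS d.
      by apply/negP => jS; have := in_set0 j; rewrite -ST inE Tj set11 jS.
    rewrite Tj in gg.
    transitivity (df d x * pair v (phi d)); last by rewrite hp mulr0.
    rewrite /pair mulr_sumr; apply: eq_bigr => t _.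
    rewrite /ev /phi (negbTE Sj) (dep_upd1 _ _ gg) (dep_upd _ _ gf jS).
    by rewrite mulrCA.
  rewrite /contract; case: ifP => jT /=; rewrite /ev /=.
    have jS : j \notin dS d.
      by apply/negP => jS; have := in_set0 j; rewrite -ST inE jS jT.
    rewrite mulr_sumr; apply: eq_bigr => t _.
    by rewrite (dep_upd _ _ gf jS) mulrCA.
  rewrite mulr_suml; apply: eq_bigr => t _.
  by rewrite (dep_upd _ _ gg (negbT jT)) mulrA.
have key : (#|[set t | v t != 0%R]| <= size ds')%N.
  apply: (IH J' _ (fun a => c a * v a)) => //.
  - move=> a; rewrite inE => va; rewrite mulf_neq0 // hc //.
    by apply: contraNT va => aA; rewrite v0.
  - exact: Hg.
  move=> x.
  have E1 : \sum_(a in [set t | v t != 0]) c a * v a * \prod_(i in J') (x i == a)%:R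
      = \sum_t v t * \sum_(a in A) c a * \prod_(i in J) (upd x j t i == a)%:R.
    transitivity (\sum_(a in A) c a * v a * \prod_(i in J') (x i == a)%:R).
      rewrite big_mkcond [RHS]big_mkcond; apply: eq_bigr => a _; rewrite inE.
      case: (eqVneq (v a) 0) => [->|va] /=.
        by case: (a \in A); rewrite ?mulr0 ?mul0r.
      case aA: (a \in A) => //.
      by move: va; rewrite v0 ?aA ?eqxx.
    under [RHS]eq_bigr => t _ do rewrite mulr_sumr.
    rewrite exchange_big /=; apply: eq_bigr => a aA.
    rewrite (bigD1 a) //= [X in _ + X]big1; last first.
      move=> t ta; rewrite (bigD1 j jJ) /= {1}/upd eqxx (negbTE ta).
      by rewrite mul0r !mulr0.
    rewrite addr0 (bigD1 j jJ) /= {1}/upd !eqxx mul1r.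
    have -> : \prod_(i in J | i != j) (upd x j a i == a)%:R
        = \prod_(i in J') (x i == a)%:R :> K.
      apply: eq_big => [i|i /andP [_ ij]]; first by rewrite in_setD1 andbC.
      by rewrite /upd (negbTE ij).
    by rewrite mulrA (mulrC (v a)).
  have H : forall ds0, all_prop (fun d => good J d /\ (single d -> pair v (phi d) = 0)) ds0 ->
      \sum_(d <- ds0) \sum_t v t * ev d (upd x j t)
      = \sum_(d <- map contract (filter (predC single) ds0)) ev d x.
    elim => [|d ds0 IHd] /=; first by rewrite !big_nil.
    move=> [[gd sd] H0]; rewrite big_cons (Hev d gd sd x).
    case: (boolP (single d)) => sg /=; first by rewrite add0r IHd.
    by rewrite big_cons IHd.
  rewrite E1 -H; last first.
    move: hg (all_prop_map_filter vphi); clear; elim: ds => //= d ds IHd [g1 g2] [h1 h2].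
    by split; [split | apply: IHd].
  rewrite exchange_big /=; apply: eq_bigr => t _.
  by rewrite hF mulr_sumr.
rewrite -(count_predC single ds); apply: leq_trans vc _.
rewrite size_map size_filter addnC leq_add2l.
by move: key; rewrite /ds' size_map size_filter.
Qed.

End Main.

Lemma prank1_dat (X : finType) (K : fieldType) (n : nat) (h : ('I_n -> X) -> K) :
  (0 < n)%N -> prank1 h -> exists d : dat X K n, good setT d /\ forall x, h x = ev d x.
Proof.
move=> n0 [P [f [Hpart HP Hdep Hh]]].
move: Hpart; rewrite /partition => /and3P [/eqP Hcov Htriv H0].
case: (boolP [exists B in P, B != setT]) => [/existsP [B0 /andP [B0P B0T]] | Hno].
  exists (Dat B0 (~: B0) (f B0) (fun x => \prod_(B in P | B != B0) f B x)); split.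
    constructor => /=.
    - by apply: contraNneq H0 => <-.
    - apply: contraNneq B0T => E; by rewrite -[B0]setCK E setC0.
    - exact: setICr.
    - exact: subsetT.
    - exact: subsetT.
    - exact: Hdep.
    - move=> x y Hxy; apply: eq_bigr => B /andP [BP BB0]; apply: (Hdep B BP) => i iB.
      apply: Hxy; have := (trivIsetP Htriv) B B0 BP B0P BB0.
      by rewrite disjoints_subset => /subsetP; apply.
  by move=> x; rewrite Hh (bigD1 B0).
exfalso; move: HP; apply/negP/negPn.
have sub : P \subset [set setT].
  apply/subsetP => B BP; rewrite inE; apply: contraR Hno => BT.
  by apply/existsP; exists B; rewrite BP.
move: sub; rewrite subset1 => /orP [//|/eqP P0].
have : Ordinal n0 \in cover P by rewrite Hcov inE.
by case/bigcupP => B; rewrite P0 inE.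
Qed.

Lemma seq_dat (X : finType) (K : fieldType) (n r : nat) (h : 'I_r -> ('I_n -> X) -> K) :
  (0 < n)%N -> (forall i, prank1 (h i)) -> forall I : seq 'I_r,
  exists ds : seq (dat X K n), size ds = size I /\ all_prop (good setT) ds /\
    forall x, \sum_(i <- I) h i x = \sum_(d <- ds) ev d x.
Proof.
move=> n0 Hh; elim => [|i I [ds [Hs [Hg He]]]].
  by exists [::]; split => //; split => // x; rewrite !big_nil.
have [d [gd Hd]] := prank1_dat n0 (Hh i).
exists (d :: ds); split; first by rewrite /= Hs.
split => // x; by rewrite !big_cons Hd He.
Qed.

Theorem lemma8 (X : finType) (K : fieldType) (n : nat) (hn : (2 <= n)%N)
  (A : {set X}) (c : X -> K) (hc : forall a, a \in A -> c a != 0)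
  (F : ('I_n -> X) -> K)
  (hF : forall x, F x = \sum_(a in A) c a * \prod_(i < n) (x i == a)%:R) :
  partition_rank F #|A|.
Proof.
have n0 : (0 < n)%N by apply: leq_trans hn.
split.
  have i1n : (1 < n)%N by [].
  pose i0 : 'I_n := Ordinal n0.
  pose i1 : 'I_n := Ordinal i1n.
  have i10 : i1 != i0 by [].
  have C0 : ~: [set i0] != [set i0].
    by apply/negP => /eqP E; have := set11 i0; rewrite -{1}E inE set11.
  exists (fun i x => c (enum_val i) * \prod_(k < n) (x k == enum_val i)%:R).
  split; last by move=> x; rewrite hF big_enum_val.
  move=> i; set a := enum_val i.
  exists [set [set i0]; ~: [set i0]].
  exists (fun B => if B == [set i0] then (fun x => c a * (x i0 == a)%:R)
                else (fun x => \prod_(k in ~: [set i0]) (x k == a)%:R)).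
  split.
  - rewrite /partition; apply/and3P; split.
    + apply/eqP/setP => k; rewrite inE; apply/bigcupP.
      case: (eqVneq k i0) => [->|ki0].
        by exists [set i0]; rewrite ?set11 // !inE eqxx.
      by exists (~: [set i0]); rewrite !inE ?ki0 ?eqxx ?orbT.
    + apply/trivIsetP => B C; rewrite !inE => /orP [] /eqP -> /orP [] /eqP -> //.
        by rewrite eqxx.
      * by move=> _; rewrite disjoints_subset setCK.
      * by move=> _; rewrite disjoints_subset.
      * by rewrite eqxx.
    + rewrite !inE negb_or; apply/andP; split.
        by apply/negP => /eqP E; have := set11 i0; rewrite -E inE.
      apply/negP => /eqP E; have : i1 \in ~: [set i0] by rewrite !inE.
      by rewrite -E inE.
  - apply/negP => /eqP E.
    have : [set i0] \in [set [set i0]; ~: [set i0]] by rewrite !inE eqxx.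
    rewrite E inE => /eqP E2; have : i1 \in [set i0] by rewrite E2 inE.
    by rewrite inE (negbTE i10).
  - move=> B; rewrite !inE => /orP [] /eqP ->.
      by rewrite eqxx => x y Hxy; rewrite Hxy // set11.
    rewrite (negbTE C0) => x y Hxy; apply: eq_bigr => k kB; by rewrite Hxy.
  - move=> x; rewrite big_setU1 /=; last by rewrite inE eq_sym.
    rewrite big_set1 eqxx (negbTE C0) -mulrA; congr (_ * _).
    rewrite (bigD1 i0) //=; congr (_ * _); apply: eq_bigl => k; by rewrite !inE.
move=> r [h [Hh HF]].
have [ds [Hs [Hg He]]] := seq_dat n0 Hh (enum 'I_r).
rewrite -(size_enum_ord r) -Hs.
apply: (@main X K n n.-1 setT A c ds) => //.
  by rewrite cardsT card_ord prednK.
move=> x; rewrite -He big_enum /= -HF hF; apply: eq_bigr => a _.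
by congr (_ * _); apply: eq_bigl => k; rewrite inE.
Qed.
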